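(* The set $Sort_2$ of $2$-sortable permutations is a permutation class whose basis (the set of minimal permutations, under pattern containment, not in $Sort_2$) is infinite; in particular the basis contains every permutation $\alpha^{(j)}$, $j\ge0$, where $\alpha^{(j)}=2j+4,\ 3,\ \omega^{(j)},\ 1,\ 5,\ 2$ and $\omega^{(j)}=2j+2,2j+5,2j,2j+3,\dots,6,9,4,7$ is the concatenation over $i=j,j-1,\dots,1$ of the pairs $2i+2,2i+5$.
   Context: The $\mathfrak{D}^k\mathfrak{I}$ machine consists of $k$ stacks $D_1,\dots,D_k$ (decreasing stacks) followed in series by a stack $I$ (increasing stack). The input permutation is read from left to right. The elements of each $D_i$ must be in decreasing order from top to bottom (top is largest), and those of $I$ in increasing order from top to bottom (top is smallest). Operations: $d_0$ pushes the next input element into $D_1$; $d_i$ ($1\le i\le k-1$) moves the top of $D_i$ to $D_{i+1}$; $d_k$ moves the top of $D_k$ to $I$; $d_{k+1}$ pops the top of $I$ and appends it to the output. An operation is legal if it respects the stack restrictions. A permutation $\pi$ is $k$-sortable if some sequence of legal operations outputs the elements of $\pi$ in increasing order; $Sort_k$ is the set of $k$-sortable permutations. A class is a downset of the pattern containment poset. *)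

(* Defs.v *)
From mathcomp Require Import all_boot.
Set Implicit Arguments. Unset Strict Implicit. Unset Printing Implicit Defensive.

Definition is_perm (s : seq nat) : Prop := perm_eq s (iota 1 (size s)).

Definition order_iso (t p : seq nat) : Prop :=
  size t = size p /\
  forall i j, i < size t -> j < size t ->
    (nth 0 t i < nth 0 t j) = (nth 0 p i < nth 0 p j).

Definition contains (s p : seq nat) : Prop :=
  exists t, subseq t s /\ order_iso t p.

(* Configuration: remaining input, the k+1 stacks (indices 0..k-1 are
   D_1..D_k, index k is I; each stack is listed top first), and output. *)
Record config := Config { inp : seq nat; stks : seq (seq nat); out : seq nat }.

Definition can_push (k j x : nat) (st : seq nat) : bool :=
  match st with
  | [::] => true
  | t :: _ => if j < k then t < x
              else x < t
  end.

(* Operation d_op:  op = 0 : input -> D_1;  1 <= op <= k-1 : D_op -> D_(op+1);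
   op = k : D_k -> I;  op = k+1 : I -> output.  None = illegal. *)
Definition step (k op : nat) (c : config) : option config :=
  if op <= k then
    let dst := nth [::] (stks c) op in
    if op == 0 then
      match inp c with
      | [::] => None
      | x :: rest =>
          if can_push k op x dst then
            Some (Config rest (set_nth [::] (stks c) op (x :: dst)) (out c))
          else None
      end
    else
      match nth [::] (stks c) op.-1 with
      | [::] => None
      | x :: rest =>
          if can_push k op x dst then
            Some (Config (inp c)
                   (set_nth [::] (set_nth [::] (stks c) op.-1 rest) op (x :: dst))
                   (out c))
          else None
      end
  else if op == k.+1 then
    match nth [::] (stks c) k with
    | [::] => None
    | x :: rest => Some (Config (inp c) (set_nth [::] (stks c) k rest) (rcons (out c) x))
    end
  else None.

Fixpoint run (k : nat) (ops : seq nat) (c : config) : option config :=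
  match ops with
  | [::] => Some c
  | op :: ops' =>
      match step k op c with
      | None => None
      | Some c' => run k ops' c'
      end
  end.

Definition sortable (k : nat) (pi : seq nat) : Prop :=
  exists ops : seq nat,
    run k ops (Config pi (nseq k.+1 [::]) [::])
    = Some (Config [::] (nseq k.+1 [::]) (sort leq pi)).

Definition Sort (k : nat) (s : seq nat) : Prop := is_perm s /\ sortable k s.

Definition is_class (C : seq nat -> Prop) : Prop :=
  (forall s, C s -> is_perm s) /\
  (forall s p, C s -> is_perm p -> contains s p -> C p).

Definition in_basis (C : seq nat -> Prop) (b : seq nat) : Prop :=
  is_perm b /\ ~ C b /\
  (forall p, is_perm p -> contains b p -> size p < size b -> C p).

Definition omega (j : nat) : seq nat :=
  flatten [seq [:: 2 * i + 2; 2 * i + 5] | i <- rev (iota 1 j)].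

Definition alpha (j : nat) : seq nat :=
  [:: 2 * j + 4; 3] ++ omega j ++ [:: 1; 5; 2].

(* Main.v *)
Require Import Defs.
From mathcomp Require Import all_boot zify.
Set Implicit Arguments. Unset Strict Implicit. Unset Printing Implicit Defensive.

Definition cfg i a b c o := Config i [:: a; b; c] o.

Definition st2 (op : nat) (i a b c o : seq nat) : option config :=
  match op with
  | 0 => if i is z :: r then
           (if (if a is t :: _ then t < z else true) then Some (cfg r (z :: a) b c o) else None)
         else None
  | 1 => if a is z :: a' then
           (if (if b is t :: _ then t < z else true) then Some (cfg i a' (z :: b) c o) else None)
         else None
  | 2 => if b is z :: b' then
           (if (if c is t :: _ then z < t else true) then Some (cfg i a b' (z :: c) o) else None)
         else None
  | 3 => if c is z :: c' then Some (cfg i a b c' (rcons o z)) else None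
  | _ => None
  end.

Lemma step2E op i a b c o : step 2 op (cfg i a b c o) = st2 op i a b c o.
Proof.
by case: op => [|[|[|[|op]]]].
Qed.

Lemma run_cat k ops1 ops2 c :
  run k (ops1 ++ ops2) c = if run k ops1 c is Some c' then run k ops2 c' else None.
Proof.
elim: ops1 c => //= op ops IH c; case: (step k op c) => //.
Qed.

Definition gtr (u v : nat) := v < u.

Ltac permt := apply/permP => q; rewrite -?cats1 ?count_cat /=; lia.

Definition GIc (s i a b c o : seq nat) :=
  [/\ exists p, i = drop p s, perm_eq (i ++ a ++ b ++ c ++ o) s,
      sorted gtr a, sorted gtr b & sorted ltn c].

Lemma drop_cons_next (s r : seq nat) p z : z :: r = drop p s -> r = drop p.+1 s.
Proof. by move=> h; rewrite -add1n -drop_drop -h /= drop0. Qed.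

Lemma GIc_step s op i a b c o c' :
  GIc s i a b c o -> st2 op i a b c o = Some c' ->
  exists i' a' b' c2 o', c' = cfg i' a' b' c2 o' /\ GIc s i' a' b' c2 o'.
Proof.
case=> [[p hp] hperm sa sb sc].
case: op => [|[|[|[|op]]]] //=.
- case: i hp hperm => // z r hp hperm.
  case: ifP => // hz [<-]; do 5 eexists; split; first reflexivity.
  split.

  + by exists p.+1; apply: drop_cons_next hp.
  + by apply: perm_trans hperm; permt.
  + by clear hperm; case: a sa hz => //= t a0 sa hz; apply/andP.
  + by [].
  + by [].
- case: a sa hperm => // z a' sa hperm.
  case: ifP => // hz [<-]; do 5 eexists; split; first reflexivity.
  split.
  + by exists p.
  + by apply: perm_trans hperm; permt.
  + by move: sa => /= /path_sorted.
  + by clear hperm; case: b sb hz => //= t b0 sb hz; apply/andP.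
  + by [].
- case: b sb hperm => // z b' sb hperm.
  case: ifP => // hz [<-]; do 5 eexists; split; first reflexivity.
  split.
  + by exists p.
  + by apply: perm_trans hperm; permt.
  + by [].
  + by move: sb => /= /path_sorted.
  + by clear hperm; case: c sc hz => //= t c0 sc hz; apply/andP.
- case: c sc hperm => // z c0 sc hperm [<-]; do 5 eexists; split; first reflexivity.
  split.
  + by exists p.
  + by apply: perm_trans hperm; permt.
  + by [].
  + by [].
  + by move: sc => /= /path_sorted.
Qed.

Lemma GIc_run s ops i a b c o c' :
  GIc s i a b c o -> run 2 ops (cfg i a b c o) = Some c' ->
  exists i' a' b' c2 o', c' = cfg i' a' b' c2 o' /\ GIc s i' a' b' c2 o'.
Proof.
elim: ops i a b c o => [|op ops IH] i a b c o hg /=.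
  by move=> [<-]; do 5 eexists; split; first reflexivity.
rewrite step2E; case E: (st2 op i a b c o) => [c1|] // hr.
have [i1 [a1 [b1 [c2 [o1 [E1 hg1]]]]]] := GIc_step hg E.
rewrite E1 in hr; exact: IH hg1 hr.
Qed.

Lemma pops_run c o :
  run 2 (nseq (size c) 3) (cfg [::] [::] [::] c o) = Some (cfg [::] [::] [::] [::] (o ++ c)).
Proof.
elim: c o => [|z c IH] o /=; first by rewrite cats0.
by rewrite IH cat_rcons.
Qed.

Lemma sorted_sort_eq (x s : seq nat) : sorted leq x -> perm_eq x s -> x = sort leq s.
Proof.
move=> sx px; apply: (sorted_eq leq_trans anti_leq) => //.
  by apply: sort_sorted; exact: leq_total.
by rewrite perm_sym perm_sort perm_sym.
Qed.

Lemma sortable_of s ops c o :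
  run 2 ops (cfg s [::] [::] [::] [::]) = Some (cfg [::] [::] [::] c o) ->
  sorted ltn (o ++ c) -> sortable 2 s.
Proof.
move=> hr hs.
have hg0 : GIc s s [::] [::] [::] [::].
  by split => //; [exists 0; rewrite drop0 | rewrite !cats0].
have [i1 [a1 [b1 [c2 [o1 [E hg1]]]]]] := GIc_run hg0 hr.
case: hg1 => _ hp _ _ _; case: E => E1 E2 E3 E4 E5.
rewrite -E1 -E2 -E3 -E4 -E5 /= in hp.
exists (ops ++ nseq (size c) 3).
rewrite run_cat.
have -> : Config s (nseq 3 [::]) [::] = cfg s [::] [::] [::] [::] by [].
rewrite hr pops_run; congr Some; rewrite /cfg; congr Config.
apply: sorted_sort_eq.
  by apply: sub_sorted hs => x y /ltnW.
by apply: perm_trans hp; permt.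
Qed.

Lemma gtr_trans : transitive gtr.
Proof. by rewrite /gtr => x y z h1 h2; apply: ltn_trans h2 h1. Qed.

Lemma gt_head h l w : sorted gtr (h :: l) -> w \in h :: l -> w <= h.
Proof.
move=> /= /(order_path_min gtr_trans) /allP hl; rewrite inE => /orP [/eqP ->//|/hl].
by rewrite /gtr => /ltnW.
Qed.

Lemma lt_head h l w : sorted ltn (h :: l) -> w \in h :: l -> h <= w.
Proof.
move=> /= /(order_path_min ltn_trans) /allP hl; rewrite inE => /orP [/eqP ->//|/hl].
by move=> /ltnW.
Qed.

Section Sim.
Variables (t p : seq nat).
Hypothesis ut : uniq t.
Hypothesis oi : order_iso t p.

Definition fm v := nth 0 p (index v t).
Definition pr (l : seq nat) := map fm (filter (fun x => x \in t) l).

Lemma fm_mono u v : u \in t -> v \in t -> (fm u < fm v) = (u < v).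
Proof.
move=> ut' vt; case: oi => _ h; rewrite /fm.
rewrite -h ?index_mem // !nth_index //.
Qed.

Lemma pr_cons z l : pr (z :: l) = if z \in t then fm z :: pr l else pr l.
Proof. by rewrite /pr /=; case: ifP. Qed.

Lemma pr_rcons z l : pr (rcons l z) = if z \in t then rcons (pr l) (fm z) else pr l.
Proof. by rewrite /pr filter_rcons; case: ifP => //; rewrite map_rcons. Qed.

Lemma pr_head l y r : pr l = y :: r -> exists w, [/\ w \in l, w \in t & y = fm w].
Proof.
elim: l => //= z l IH; rewrite pr_cons; case: ifP => zt.
  by case=> <- _; exists z; rewrite inE eqxx.
by move/IH => [w [wl wt ->]]; exists w; rewrite inE wl orbT.
Qed.

Lemma sim_step s op i a b c o c' :
  GIc s i a b c o -> st2 op i a b c o = Some c' ->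
  exists i' a' b' c2 o', c' = cfg i' a' b' c2 o' /\
   (cfg (pr i') (pr a') (pr b') (pr c2) (pr o') = cfg (pr i) (pr a) (pr b) (pr c) (pr o) \/
    st2 op (pr i) (pr a) (pr b) (pr c) (pr o) = Some (cfg (pr i') (pr a') (pr b') (pr c2) (pr o'))).
Proof.
case=> _ _ sa sb sc.
case: op => [|[|[|[|op]]]] //=.
- case: i => // z r; case: ifP => // hz [<-]; do 5 eexists; split; first reflexivity.
  rewrite !pr_cons; case: ifP => zt; [right|by left].
  case E: (pr a) => [|y r'] /=; first by [].
  have [w [wa wt ->]] := pr_head E.
  case: a sa hz wa {E} => // h a' sa hz wa.
  have := gt_head sa wa; rewrite fm_mono // => hw.
  by rewrite (leq_ltn_trans hw hz).
- case: a sa => // z a' sa; case: ifP => // hz [<-]; do 5 eexists; split; first reflexivity.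
  rewrite !pr_cons; case: ifP => zt; [right|by left].
  case E: (pr b) => [|y r'] /=; first by [].
  have [w [wb wt ->]] := pr_head E.
  case: b sb hz wb {E} => // h b' sb hz wb.
  have := gt_head sb wb; rewrite fm_mono // => hw.
  by rewrite (leq_ltn_trans hw hz).
- case: b sb => // z b' sb; case: ifP => // hz [<-]; do 5 eexists; split; first reflexivity.
  rewrite !pr_cons; case: ifP => zt; [right|by left].
  case E: (pr c) => [|y r'] /=; first by [].
  have [w [wc wt ->]] := pr_head E.
  case: c sc hz wc {E} => // h c3 sc hz wc.
  have := lt_head sc wc; rewrite fm_mono // => hw.
  by rewrite (leq_trans hz hw).
- case: c sc => // z c3 sc [<-]; do 5 eexists; split; first reflexivity.
  rewrite !pr_cons pr_rcons; case: ifP => zt; [right|by left].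
  by [].
Qed.
End Sim.

Section SimRun.
Variables (t p : seq nat).
Hypothesis ut : uniq t.
Hypothesis oi : order_iso t p.

Lemma sim_run s ops i a b c o c' :
  GIc s i a b c o -> run 2 ops (cfg i a b c o) = Some c' ->
  exists i' a' b' c2 o' ops', c' = cfg i' a' b' c2 o' /\
    run 2 ops' (cfg (pr t p i) (pr t p a) (pr t p b) (pr t p c) (pr t p o))
    = Some (cfg (pr t p i') (pr t p a') (pr t p b') (pr t p c2) (pr t p o')).
Proof.
elim: ops i a b c o => [|op ops IH] i a b c o hg /=.
  by move=> [<-]; exists i, a, b, c, o, [::].
rewrite step2E; case E: (st2 op i a b c o) => [c1|] // hr.
have [i1 [a1 [b1 [c2 [o1 [E1 hg1]]]]]] := GIc_step hg E.
have [i3 [a3 [b3 [c3 [o3 [E3 hs]]]]]] := sim_step oi hg E.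
rewrite E1 in E3 hr; case: E3 => <- <- <- <- <- in hs.
have [i' [a' [b' [c4 [o' [ops' [-> hr']]]]]]] := IH _ _ _ _ _ hg1 hr.
exists i', a', b', c4, o'.
case: hs => [hs|hs].
  by exists ops'; split => //; rewrite -hs.
by exists (op :: ops'); split => //=; rewrite step2E hs.
Qed.
End SimRun.

Lemma map_fm_id (t p : seq nat) : uniq t -> order_iso t p -> map (fm t p) t = p.
Proof.
move=> ut [hs _]; apply: (@eq_from_nth _ 0); rewrite size_map // => k hk.
by rewrite (nth_map 0) // /fm index_uniq.
Qed.

Lemma sortable_closed s t p :
  uniq s -> sortable 2 s -> subseq t s -> order_iso t p -> sortable 2 p.
Proof.
move=> us [ops hr] sts oi.
have ut := subseq_uniq sts us.
have hg0 : GIc s s [::] [::] [::] [::].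
  by split => //; [exists 0; rewrite drop0 | rewrite !cats0].
have [i' [a' [b' [c4 [o' [ops' [E hr']]]]]]] := sim_run oi hg0 hr.
case: E => <- <- <- <- <- in hr'.
have ps : pr t p s = p.
  rewrite /pr -[X in map _ X = _](_ : t = filter (fun x => x \in t) s).
    exact: map_fm_id.
  exact: (elimT (subseq_uniqP us) sts).
have hr2 : run 2 ops' (cfg p [::] [::] [::] [::]) =
   Some (cfg [::] [::] [::] [::] (pr t p (sort leq s))) by rewrite -{1}ps; exact: hr'.
exists ops'.
change (run 2 ops' (cfg p [::] [::] [::] [::]) = Some (cfg [::] [::] [::] [::] (sort leq p))).
rewrite hr2; congr Some; rewrite /cfg; congr Config.
apply: sorted_sort_eq.
  have hsf : sorted leq [seq x <- sort leq s | x \in t].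
    by apply: sorted_filter; [exact: leq_trans | apply: sort_sorted; exact: leq_total].
  apply: (@homo_sorted_in _ _ (fun x => x \in t) _ leq leq _ _ _ hsf).
  - move=> x y xt yt; rewrite leq_eqVlt => /orP [/eqP ->//|].
    by rewrite -(fm_mono oi) // => /ltnW.
  - by apply/allP => x; rewrite mem_filter => /andP [].
rewrite -[X in perm_eq _ X]ps; apply: perm_map; apply: perm_filter; by rewrite perm_sort.
Qed.

Lemma omegaS n : omega n.+1 = 2 * n + 4 :: 2 * n + 7 :: omega n.
Proof.
rewrite /omega -[n.+1]addn1 iotaD rev_cat /= add1n.
by congr (_ :: _ :: _); lia.
Qed.

Lemma omega0 : omega 0 = [::]. Proof. by []. Qed.

Lemma size_omega n : size (omega n) = 2 * n.
Proof. elim: n => // n IH; rewrite omegaS /= IH; lia. Qed.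

Lemma mem_omega n v : v \in omega n -> exists k, [/\ 1 <= k, k <= n & (v = 2 * k + 2 \/ v = 2 * k + 5)].
Proof.
elim: n => // n IH; rewrite omegaS !inE => /orP [/eqP ->|/orP [/eqP ->|/IH [k [h1 h2 h3]]]].
- by exists n.+1; split => //; left; lia.
- by exists n.+1; split => //; right; lia.
- by exists k; split => //; lia.
Qed.

Lemma omega_mem n k : 1 <= k <= n -> (2 * k + 2 \in omega n) && (2 * k + 5 \in omega n).
Proof.
elim: n => [|n IH] /andP [h1 h2]; first lia.
rewrite omegaS !inE.
case: (ltngtP k n.+1) h2 => // hk _.
  by have /andP [-> ->] := IH (introT andP (conj h1 hk)); rewrite !orbT.
by subst k; apply/andP; split; apply/orP; [left|right; apply/orP; left]; apply/eqP; lia.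
Qed.

Definition W n := omega n ++ [:: 1; 5; 2].

Lemma WS n : W n.+1 = 2 * n + 4 :: 2 * n + 7 :: W n.
Proof. by rewrite /W omegaS. Qed.

Lemma alphaE j : alpha j = 2 * j + 4 :: 3 :: W j.
Proof. by []. Qed.

Lemma size_alpha j : size (alpha j) = 2 * j + 5.
Proof. rewrite alphaE /= /W size_cat size_omega /=; lia. Qed.

Lemma perm_alphaS j : perm_eq (alpha j.+1) (2 * j + 6 :: 2 * j + 7 :: alpha j).
Proof.
rewrite !alphaE WS.
have -> : 2 * j.+1 + 4 = 2 * j + 6 by lia.
by permt.
Qed.

Lemma perm_alpha j : perm_eq (alpha j) (iota 1 (2 * j + 5)).
Proof.
elim: j => [|j IH]; first by [].
apply: (perm_trans (perm_alphaS j)).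
have -> : 2 * j.+1 + 5 = (2 * j + 5) + 2 by lia.
rewrite iotaD.
apply: (@perm_trans _ (2 * j + 6 :: 2 * j + 7 :: iota 1 (2 * j + 5))).
  by rewrite !perm_cons.
have -> : 1 + (2 * j + 5) = 2 * j + 6 by lia.
by rewrite perm_sym perm_catC /= -addnS.
Qed.

Lemma is_perm_alpha j : is_perm (alpha j).
Proof. by rewrite /is_perm size_alpha perm_alpha. Qed.

Lemma uniq_alpha j : uniq (alpha j).
Proof. by rewrite (perm_uniq (perm_alpha j)) iota_uniq. Qed.

Lemma sort_alpha j : sort leq (alpha j) = iota 1 (2 * j + 5).
Proof.
apply/esym/sorted_sort_eq; last by rewrite perm_sym perm_alpha.
exact: iota_sorted.
Qed.

Definition prec' (s : seq nat) u v := forall p, u \in drop p s -> v \in drop p s.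

Lemma precA (x y : seq nat) u v : u \notin y -> v \in y -> prec' (x ++ y) u v.
Proof.
move=> uy vy p; rewrite !drop_cat; case: ltnP => h.
  by move=> _; rewrite mem_cat vy orbT.
by move/mem_drop => h2; rewrite h2 in uy.
Qed.

Lemma precB (x y : seq nat) u v : u \in y -> prec' y u v -> prec' (x ++ y) u v.
Proof.
move=> uy h p; rewrite !drop_cat; case: ltnP => hp.
  by move=> _; have := h 0; rewrite !drop0 mem_cat => ->; rewrite ?orbT.
exact: h.
Qed.

Lemma alpha_split j : alpha j = ([:: 2 * j + 4; 3] ++ omega j) ++ [:: 1; 5; 2].
Proof. by rewrite alphaE /W. Qed.

Lemma prec_52 j : prec' (alpha j) 5 2.
Proof.
rewrite alpha_split; apply: precB => //.
by case=> [|[|[|p]]].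
Qed.

Lemma prec_y5 j k : 1 <= k <= j -> prec' (alpha j) (2 * k + 5) 5.
Proof.
move=> hk; rewrite alpha_split; apply: precA => //.
rewrite !inE; apply/negP => /or3P [] /eqP; lia.
Qed.

Lemma mem_alpha_y j k : 1 <= k <= j -> 2 * k + 5 \in alpha j.
Proof.
move=> hk; rewrite alpha_split !mem_cat.
by have /andP [_ ->] := omega_mem hk; rewrite !orbT.
Qed.

Lemma mem_alpha_2 j : 2 \in alpha j.
Proof. by rewrite alpha_split !mem_cat !inE eqxx !orbT. Qed.

Lemma mem_alpha_5 j : 5 \in alpha j.
Proof. by rewrite alpha_split !mem_cat !inE eqxx !orbT. Qed.

Definition DA (o : seq nat) := o <> iota 1 (size o).
Definition DB (s b c o : seq nat) := exists x y,
  6 <= x /\ x < y /\ x \in c /\ y \in s /\ y \notin c /\ y \notin o /\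
  5 \notin b /\ 5 \notin c /\ 5 \notin o /\ prec' s y 5.
Definition DC (s a b c o : seq nat) := exists x,
  2 < x /\ x < 5 /\ x \in c /\ 5 \notin c /\ 5 \notin o /\ 2 \notin b /\ 2 \notin c /\
  2 \notin o /\ (2 \in a -> 5 \in b) /\ 5 \in s /\ prec' s 5 2.
Definition Dead s a b c o := DA o \/ DB s b c o \/ DC s a b c o.

Lemma pop_pre o z : rcons o z = iota 1 (size (rcons o z)) ->
  o = iota 1 (size o) /\ forall v, 0 < v < z -> v \in o.
Proof.
rewrite size_rcons -[(size o).+1]addn1 iotaD cats1 => /rcons_inj [ho hz].
split=> // v /andP [h1 h2]; rewrite ho mem_iota; lia.
Qed.

Lemma uniq_clash (l l1 l2 : seq nat) x : uniq l ->
  (forall q : pred nat, count q l1 + count q l2 <= count q l) -> x \in l1 -> x \in l2 -> False.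
Proof.
move=> ul hc x1 x2.
have := hc (pred1 x); rewrite (count_uniq_mem _ ul).
have : 0 < count (pred1 x) l1 by rewrite -has_count has_pred1.
have : 0 < count (pred1 x) l2 by rewrite -has_count has_pred1.
case: (x \in l) => /=; lia.
Qed.

Ltac slia := repeat match goal with
  | H : is_true (_ \in _) |- _ => clear H
  | H : is_true (~~ (_ \in _)) |- _ => clear H
  | H : is_true (uniq _) |- _ => clear H
  | H : is_true (sorted _ _) |- _ => clear H
  | H : is_true (path _ _ _) |- _ => clear H
  end; lia.

Ltac splits := repeat match goal with |- _ /\ _ => split end.

Ltac clash U h1 h2 := exfalso; apply: (uniq_clash U _ h1 h2); clear -U; intros q; rewrite ?count_cat /=; lia.

Lemma DA_step op i a b c o c1 : DA o -> st2 op i a b c o = Some c1 ->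
  exists i' a' b' c' o', c1 = cfg i' a' b' c' o' /\ DA o'.
Proof.
move=> ho; case: op => [|[|[|[|op]]]] //=.
- by case: i => // z r; case: ifP => // _ [<-]; do 5 eexists.
- by case: a => // z r; case: ifP => // _ [<-]; do 5 eexists.
- by case: b => // z r; case: ifP => // _ [<-]; do 5 eexists.
- case: c => // z r [<-]; do 5 eexists; split; first reflexivity.
  by move/pop_pre => [].
Qed.

Lemma DB_step s op i a b c o c1 : uniq s -> GIc s i a b c o -> DB s b c o ->
  st2 op i a b c o = Some c1 ->
  exists i' a' b' c' o', c1 = cfg i' a' b' c' o' /\ (DA o' \/ DB s b' c' o').
Proof.
move=> us hg [x [y [h6 [hxy [xc [ys [yc [yo [b5 [c5 [o5 hpr]]]]]]]]]]].
case: hg => [[p hp] hperm sa sb sc].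
have U : uniq (i ++ a ++ b ++ c ++ o) by rewrite (perm_uniq hperm).
have M : y \in i ++ a ++ b ++ c ++ o by rewrite (perm_mem hperm).
clear hperm.
case: op => [|[|[|[|op]]]] //=.
- case: i hp U M => // z r hp U M; case: ifP => // hz [<-].
  do 5 eexists; split; first reflexivity.
  by right; exists x, y.
- case: a sa U M => // z a' sa U M; case: ifP => // hz [<-].
  do 5 eexists; split; first reflexivity.
  right; exists x, y; splits; try done.
  rewrite inE negb_or b5 andbT; apply/eqP => z5; subst z.
  move: M; rewrite !mem_cat => /orP [yi|/orP [ya|/orP [yb|/orP [yc'|yo']]]].
  + have h5 : 5 \in i by rewrite hp; apply: hpr; rewrite -hp.
    have h5a : 5 \in 5 :: a' by rewrite inE eqxx.
    clash U h5 h5a.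
  + have := gt_head sa ya; slia.
  + case: b sb hz yb {U b5} => // h b' sb hz yb.
    have := gt_head sb yb; slia.
  + by rewrite yc' in yc.
  + by rewrite yo' in yo.
- case: b sb U M b5 => // z b' sb U M b5; case: ifP => // hz [<-].
  do 5 eexists; split; first reflexivity.
  right; exists x, y.
  have zy : z < y.
    case: c sc hz xc {U M yc c5} => // h c' sc hz xc.
    have := lt_head sc xc; slia.
  have z5 : z != 5 by apply/eqP => z5; rewrite z5 inE eqxx in b5.
  rewrite !inE; splits; try done.
  + by rewrite xc orbT.
  + by rewrite negb_or yc andbT; apply/eqP => e; slia.
  + by move: b5; rewrite inE negb_or => /andP [].
  + by rewrite negb_or c5 andbT eq_sym.
- case: c sc xc c5 yc U M => // z c' sc xc c5 yc U M [<-].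
  do 5 eexists; split; first reflexivity.
  case: (eqVneq z x) => [zx|zx].
    left => /pop_pre [_ h]; have := h 5; rewrite (negbTE o5); slia.
  right; exists x, y.
  move: xc c5 yc; rewrite !inE => xc c5 yc.
  rewrite !mem_rcons !inE.
  splits; try done.
  + by move: xc; rewrite eq_sym (negbTE zx).
  + by move: yc; rewrite negb_or => /andP [].
  + rewrite negb_or yo andbT; by move: yc; rewrite negb_or eq_sym => /andP [].
  + by move: c5; rewrite negb_or => /andP [].
  + rewrite negb_or o5 andbT; by move: c5; rewrite negb_or eq_sym => /andP [].
Qed.

Lemma DC_step s op i a b c o c1 : uniq s -> GIc s i a b c o -> DC s a b c o ->
  st2 op i a b c o = Some c1 ->
  exists i' a' b' c' o', c1 = cfg i' a' b' c' o' /\ (DA o' \/ DC s a' b' c' o').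
Proof.
move=> us hg [x [h2 [h5 [xc [c5 [o5 [b2 [c2 [o2 [ab [s5 hpr]]]]]]]]]]].
case: hg => [[p hp] hperm sa sb sc].
have U : uniq (i ++ a ++ b ++ c ++ o) by rewrite (perm_uniq hperm).
have M : 5 \in i ++ a ++ b ++ c ++ o by rewrite (perm_mem hperm).
clear hperm.
case: op => [|[|[|[|op]]]] //=.
- case: i hp U M => // z r hp U M; case: ifP => // hz [<-].
  do 5 eexists; split; first reflexivity.
  right; exists x; splits; try done.
  rewrite inE => /orP [/eqP z2|/ab //]; subst z.
  move: M; rewrite !mem_cat => /orP [yi|/orP [ya|/orP [yb|/orP [yc'|yo']]]].
  + have hr : r = drop p.+1 s by apply: drop_cons_next hp.
    move: yi; rewrite inE => /orP [/eqP //|yr].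
    have h2r : 2 \in r by rewrite hr; apply: hpr; rewrite -hr.
    by move: U; rewrite cat_uniq => /andP [/andP [/negP]].
  + case: a sa hz ya {U ab} => // h a' sa hz ya.
    have := gt_head sa ya; slia.
  + by [].
  + by rewrite yc' in c5.
  + by rewrite yo' in o5.
- case: a sa U M ab => // z a0 sa U M ab; case: ifP => // hz [<-].
  do 5 eexists; split; first reflexivity.
  right; exists x; splits; try done.
  + rewrite inE negb_or b2 andbT; apply/eqP => z2; subst z.
    have := ab; rewrite inE eqxx => /(_ isT) b5.
    case: b sb hz b5 b2 {U ab M} => // h b' sb hz b5 b2.
    have := gt_head sb b5; slia.
  + by move=> h; rewrite inE (ab _) ?orbT // inE h orbT.
- case: b sb U M b2 ab => // z b' sb U M b2 ab; case: ifP => // hz [<-].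
  do 5 eexists; split; first reflexivity.
  have z5 : z != 5.
    apply/eqP => z5; subst z.
    case: c sc hz xc c5 c2 {U M} => // h c' sc hz xc c5 c2.
    have := lt_head sc xc; slia.
  have z2 : z != 2 by apply/eqP => z2; rewrite z2 inE eqxx in b2.
  right; exists x; splits; try done.
  + by rewrite inE xc orbT.
  + by rewrite inE negb_or c5 andbT eq_sym.
  + by move: b2; rewrite inE negb_or => /andP [].
  + by rewrite inE negb_or c2 andbT eq_sym.
  + by move=> /ab; rewrite inE eq_sym (negbTE z5).
- case: c sc xc c5 c2 U M => // z c' sc xc c5 c2 U M [<-].
  do 5 eexists; split; first reflexivity.
  case: (eqVneq z x) => [zx|zx].
    left => /pop_pre [_ h]; have := h 2; rewrite (negbTE o2); subst; slia.
  right; exists x.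
  move: xc c5 c2; rewrite !inE => xc c5 c2.
  rewrite !mem_rcons !inE.
  splits; try done.
  + by move: xc; rewrite eq_sym (negbTE zx).
  + by move: c5; rewrite negb_or => /andP [].
  + rewrite negb_or o5 andbT; by move: c5; rewrite negb_or eq_sym => /andP [].
  + by move: c2; rewrite negb_or => /andP [].
  + rewrite negb_or o2 andbT; by move: c2; rewrite negb_or eq_sym => /andP [].
Qed.

Lemma Dead_step s op i a b c o c1 : uniq s -> GIc s i a b c o -> Dead s a b c o ->
  st2 op i a b c o = Some c1 ->
  exists i' a' b' c' o', c1 = cfg i' a' b' c' o' /\ Dead s a' b' c' o'.
Proof.
move=> us hg [hd|[hd|hd]] E.
- have [i' [a' [b' [c' [o' [-> h]]]]]] := DA_step hd E.
  by exists i', a', b', c', o'; split => //; left.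
- have [i' [a' [b' [c' [o' [-> [h|h]]]]]]] := DB_step us hg hd E.
  + by exists i', a', b', c', o'; split => //; left.
  + by exists i', a', b', c', o'; split => //; right; left.
- have [i' [a' [b' [c' [o' [-> [h|h]]]]]]] := DC_step us hg hd E.
  + by exists i', a', b', c', o'; split => //; left.
  + by exists i', a', b', c', o'; split => //; right; right.
Qed.

Section NS.
Variable j : nat.

Definition T m := iota m (2 * j + 6 - m).

Lemma T_cons m : m <= 2 * j + 5 -> T m = m :: T m.+1.
Proof. by move=> h; rewrite /T; have -> : 2 * j + 6 - m = (2 * j + 6 - m.+1).+1 by lia. Qed.

Lemma T_nil m : 2 * j + 5 < m -> T m = [::].
Proof. by move=> h; rewrite /T; have -> : 2 * j + 6 - m = 0 by lia. Qed.

Lemma mem_T v m : (v \in T m) = (m <= v <= 2 * j + 5).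
Proof. rewrite /T mem_iota; apply/idP/idP => /andP [h1 h2]; apply/andP; split => //; lia. Qed.

Lemma pushT z m i a b o : z < m ->
  st2 2 i a (z :: b) (T m) o = Some (cfg i a b (z :: T m) o).
Proof.
move=> h; case: (leqP m (2 * j + 5)) => hm.
  by rewrite {1}(T_cons hm) /= h -(T_cons hm).
by rewrite (T_nil hm).
Qed.

Lemma pop_DA i a b c c1 : st2 3 i a b c [::] = Some c1 -> 1 \notin c ->
  exists i' a' b' c' o', c1 = cfg i' a' b' c' o' /\ DA o'.
Proof.
case: c => //= z c [<-]; rewrite inE negb_or => /andP [z1 _].
do 5 eexists; split; first reflexivity.
by move=> [h]; rewrite h eqxx in z1.
Qed.

Definition tup := (seq nat * seq nat * seq nat * seq nat * seq nat)%type.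
Definition LA n : tup := (W n, [:: 3], [:: 2 * n + 4], T (2 * n + 6), [::]).
Definition LB n : tup := (2 * n + 7 :: W n, [:: 2 * n + 4; 3], [:: 2 * n + 6], T (2 * n + 8), [::]).
Definition LC5 n : tup := (W n, [:: 2 * n + 7; 2 * n + 4; 3], [:: 2 * n + 6], T (2 * n + 8), [::]).
Definition LC4 n : tup := (W n, [:: 2 * n + 4; 3], [:: 2 * n + 7; 2 * n + 6], T (2 * n + 8), [::]).
Definition LC3 n : tup := (W n, [:: 2 * n + 4; 3], [:: 2 * n + 6], T (2 * n + 7), [::]).
Definition LC2 n : tup := (W n, [:: 2 * n + 4; 3], [::], T (2 * n + 6), [::]).

Definition Live (x : tup) :=
  x = (alpha j, [::], [::], [::], [::]) \/
  x = (3 :: W j, [::], [:: 2 * j + 4], [::], [::]) \/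
  x = (3 :: W j, [:: 2 * j + 4], [::], [::], [::]) \/
  (exists n, n <= j /\ x = LA n) \/
  (exists n, n < j /\ (x = LB n \/ x = LC5 n \/ x = LC4 n \/ x = LC3 n \/ x = LC2 n)).

Definition Res (c1 : config) := exists i' a' b' c' o', c1 = cfg i' a' b' c' o' /\
  (Live (i', a', b', c', o') \/ Dead (alpha j) a' b' c' o').

Lemma Res_DA c1 : (exists i' a' b' c' o', c1 = cfg i' a' b' c' o' /\ DA o') -> Res c1.
Proof.
by move=> [i' [a' [b' [c' [o' [-> h]]]]]]; exists i', a', b', c', o'; split => //; right; left.
Qed.

Lemma Res_live i a b c o : Live (i, a, b, c, o) -> Res (cfg i a b c o).
Proof. by move=> h; exists i, a, b, c, o; split => //; left. Qed.

Lemma Res_DB i a b c o x y : 6 <= x -> x < y -> x \in c -> y \in alpha j -> y \notin c ->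
  y \notin o -> 5 \notin b -> 5 \notin c -> 5 \notin o -> prec' (alpha j) y 5 ->
  Res (cfg i a b c o).
Proof.
move=> *; exists i, a, b, c, o; split => //; right; right; left.
by exists x, y; splits.
Qed.

Lemma Res_DC4 i a b c o : 4 \in c -> 5 \notin c -> 5 \notin o -> 2 \notin b -> 2 \notin c ->
  2 \notin o -> 2 \notin a -> Res (cfg i a b c o).
Proof.
move=> *; exists i, a, b, c, o; split => //; right; right; right.
exists 4; splits => //.
- by move=> h; move: h; apply/implyP; rewrite implybE; apply/orP; left.
- exact: mem_alpha_5.
- exact: prec_52.
Qed.

Lemma W_hd n : exists w r, W n = w :: r /\ w <= 2 * n + 2.
Proof.
case: n => [|m]; first by exists 1, [:: 5; 2].
by rewrite WS; exists (2 * m + 4), (2 * m + 7 :: W m); split => //; lia.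
Qed.

Lemma notin_T v m : v < m -> v \notin T m.
Proof. by move=> h; rewrite mem_T; apply/negP => /andP [h1 _]; lia. Qed.

Ltac none := rewrite /=; by [].

Ltac illegal := let H := fresh in case: ifP => // H; exfalso; slia.

Lemma live_step op i a b c o c1 : Live (i, a, b, c, o) ->
  st2 op i a b c o = Some c1 -> Res c1.
Proof.
move=> [E|[E|[E|[[n [hn E]]|[n [hn [E|[E|[E|[E|E]]]]]]]]]];
  move: E; rewrite /LA /LB /LC5 /LC4 /LC3 /LC2 => [[-> -> -> -> ->]].
-
  rewrite alphaE; case: op => [|[|[|[|op]]]]; try none; rewrite /= => [[<-]].
  by apply: Res_live; do 2 right; left.
-
  case: op => [|[|[|[|op]]]]; try none.
  + rewrite /=; move=> [<-]; apply: Res_live; do 3 right; left; exists j; split => //.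
    by rewrite /LA (T_nil (_ : 2 * j + 5 < 2 * j + 6)) //; lia.
  + rewrite /=; move=> [<-]; have [j0|jp] := eqVneq j 0.
      have -> : 2 * j + 4 = 4 by rewrite j0.
      by apply: Res_DC4.
    apply: (@Res_DB _ _ _ _ _ (2 * j + 4) (2 * j + 5)) => //; try slia.
    * by rewrite inE eqxx.
    * by apply: mem_alpha_y; apply/andP; split => //; slia.
    * by rewrite inE; apply/eqP; lia.
    * by rewrite inE; apply/eqP; slia.
    * by apply: prec_y5; apply/andP; split => //; slia.
-
  case: op => [|[|[|[|op]]]]; try none.
  + rewrite /=; by illegal.
  + by move=> [<-]; apply: Res_live; right; left.
-
  case: op => [|[|[|[|op]]]]; try none.
  + rewrite /=; case: n hn => [|m] hn; first by [].
    rewrite WS /=; case: ifP => // H [<-]; apply: Res_live; do 4 right; exists m; split.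
      lia.
    left; rewrite /LB.
    have -> : 2 * m.+1 + 4 = 2 * m + 6 by lia.
    by have -> : 2 * m.+1 + 6 = 2 * m + 8 by lia.
  + rewrite /=; by illegal.
  + rewrite pushT; last lia.
    move=> [<-]; case: n hn => [|m] hn.
      apply: Res_DC4 => //; rewrite ?inE ?negb_or ?notin_T //; lia.
    apply: (@Res_DB _ _ _ _ _ (2 * m.+1 + 4) (2 * m.+1 + 5)) => //; try slia.
    * by rewrite inE eqxx.
    * by apply: mem_alpha_y; apply/andP; split.
    * rewrite inE negb_or notin_T ?andbT; last lia; apply/eqP; lia.
    * rewrite inE negb_or notin_T ?andbT; last lia; apply/eqP; lia.
    * by apply: prec_y5; apply/andP; split.
  + move=> E; apply: Res_DA; apply: pop_DA E _; rewrite notin_T //; lia.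
-
  case: op => [|[|[|[|op]]]]; try none.
  + rewrite /=; case: ifP => // H [<-]; apply: Res_live; do 4 right; exists n; split => //.
    by right; left.
  + rewrite /=; by illegal.
  + rewrite pushT; last lia.
    move=> [<-].
    apply: (@Res_DB _ _ _ _ _ (2 * n + 6) (2 * n + 7)) => //; try slia.
    * by rewrite inE eqxx.
    * have -> : 2 * n + 7 = 2 * n.+1 + 5 by lia.
      by apply: mem_alpha_y; apply/andP; split.
    * rewrite inE negb_or notin_T ?andbT; last lia; apply/eqP; lia.
    * rewrite inE negb_or notin_T ?andbT; last lia; apply/eqP; lia.
    * have -> : 2 * n + 7 = 2 * n.+1 + 5 by lia.
      by apply: prec_y5; apply/andP; split.
  + move=> E; apply: Res_DA; apply: pop_DA E _; rewrite notin_T //; lia.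
-
  case: op => [|[|[|[|op]]]]; try none.
  + have [w [r [-> hw]]] := W_hd n; rewrite /=; by illegal.
  + rewrite /=; case: ifP => // H [<-]; apply: Res_live; do 4 right; exists n; split => //.
    by do 2 right; left.
  + rewrite pushT; last lia.
    move=> [<-].
    apply: (@Res_DB _ _ _ _ _ (2 * n + 6) (2 * n + 7)) => //; try slia.
    * by rewrite inE eqxx.
    * have -> : 2 * n + 7 = 2 * n.+1 + 5 by lia.
      by apply: mem_alpha_y; apply/andP; split.
    * rewrite inE negb_or notin_T ?andbT; last lia; apply/eqP; lia.
    * rewrite inE negb_or notin_T ?andbT; last lia; apply/eqP; lia.
    * have -> : 2 * n + 7 = 2 * n.+1 + 5 by lia.
      by apply: prec_y5; apply/andP; split.
  + move=> E; apply: Res_DA; apply: pop_DA E _; rewrite notin_T //; lia.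
-
  case: op => [|[|[|[|op]]]]; try none.
  + have [w [r [-> hw]]] := W_hd n; rewrite /=; by illegal.
  + rewrite /=; by illegal.
  + rewrite pushT; last lia.
    move=> [<-]; apply: Res_live; do 4 right; exists n; split => //.
    do 3 right; left; rewrite /LC3.
    have -> // : T (2 * n + 7) = 2 * n + 7 :: T (2 * n + 8).
    by rewrite T_cons; [congr (_ :: T _); lia | lia].
  + move=> E; apply: Res_DA; apply: pop_DA E _; rewrite notin_T //; lia.
-
  case: op => [|[|[|[|op]]]]; try none.
  + have [w [r [-> hw]]] := W_hd n; rewrite /=; by illegal.
  + rewrite /=; by illegal.
  + rewrite pushT; last lia.
    move=> [<-]; apply: Res_live; do 4 right; exists n; split => //.
    do 4 right; rewrite /LC2.
    have -> // : T (2 * n + 6) = 2 * n + 6 :: T (2 * n + 7).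
    by rewrite T_cons; [congr (_ :: T _); lia | lia].
  + move=> E; apply: Res_DA; apply: pop_DA E _; rewrite notin_T //; lia.
-
  case: op => [|[|[|[|op]]]]; try none.
  + have [w [r [-> hw]]] := W_hd n; rewrite /=; by illegal.
  + rewrite /=; move=> [<-]; apply: Res_live; do 3 right; left; exists n; split => //; lia.
  + move=> E; apply: Res_DA; apply: pop_DA E _; rewrite notin_T //; lia.
Qed.

End NS.

Section NS2.
Variable j : nat.

Definition InvN i a b c o :=
  GIc (alpha j) i a b c o /\ (Live j (i, a, b, c, o) \/ Dead (alpha j) a b c o).

Lemma InvN_step op i a b c o c1 : InvN i a b c o -> st2 op i a b c o = Some c1 ->
  exists i' a' b' c' o', c1 = cfg i' a' b' c' o' /\ InvN i' a' b' c' o'.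
Proof.
move=> [hg hl] E.
have [i1 [a1 [b1 [c2 [o1 [E1 hg1]]]]]] := GIc_step hg E.
exists i1, a1, b1, c2, o1; split => //; split => //.
case: hl => [hl|hd].
  have [i' [a' [b' [c' [o' [E2 h]]]]]] := live_step hl E.
  by rewrite E1 in E2; case: E2 => -> -> -> -> ->.
have [i' [a' [b' [c' [o' [E2 h]]]]]] := Dead_step (uniq_alpha j) hg hd E.
by rewrite E1 in E2; case: E2 => -> -> -> -> ->; right.
Qed.

Lemma InvN_run ops i a b c o c1 : InvN i a b c o -> run 2 ops (cfg i a b c o) = Some c1 ->
  exists i' a' b' c' o', c1 = cfg i' a' b' c' o' /\ InvN i' a' b' c' o'.
Proof.
elim: ops i a b c o => [|op ops IH] i a b c o hi /=.
  by move=> [<-]; exists i, a, b, c, o.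
rewrite step2E; case E: (st2 op i a b c o) => [c2|] // hr.
have [i1 [a1 [b1 [c3 [o1 [E1 h1]]]]]] := InvN_step hi E.
by rewrite E1 in hr; apply: IH h1 hr.
Qed.

Lemma W_nil n : W n <> [::].
Proof. by rewrite /W; case: (omega n). Qed.

Lemma alpha_not_sortable : ~ sortable 2 (alpha j).
Proof.
move=> [ops hr].
have h0 : InvN (alpha j) [::] [::] [::] [::].
  split; last by left; left.
  by split => //; [exists 0; rewrite drop0 | rewrite !cats0].
have [i' [a' [b' [c' [o' [E [_ hl]]]]]]] := InvN_run h0 hr.
case: E => <- <- <- <- <- in hl.
case: hl => [hl|[hd|[hd|hd]]].
- move: hl; rewrite /Live /LA /LB /LC5 /LC4 /LC3 /LC2.
  move=> [E|[E|[E|[[n [_ E]]|[n [_ [E|[E|[E|[E|E]]]]]]]]]]; case: E => //.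
- by apply: hd; rewrite sort_alpha size_iota.
- by case: hd => [x [y [_ [_ []]]]].
- by case: hd => [x [_ [_ []]]].
Qed.

End NS2.

Definition hdlt m (P : seq nat) := if P is t :: _ then t < m else true.
Definition hdgt m (I : seq nat) := if I is t :: _ then m < t else true.

Ltac ifs := repeat (rewrite ifT; last by lia).

Definition bA := [:: 0; 0; 1; 2; 2; 1].
Definition bZ := [:: 0; 0; 1; 2; 1].

Lemma runE op ops c : run 2 (op :: ops) c = if step 2 op c is Some c' then run 2 ops c' else None.
Proof. by []. Qed.

Ltac crun := repeat (rewrite ?step2E /=; ifs).

Lemma blockA k r P Q I o : hdlt (2 * k + 2) P -> hdlt (2 * k + 2) Q -> hdgt (2 * k + 5) I ->
  run 2 bA (cfg (2 * k + 2 :: 2 * k + 5 :: r) P (2 * k + 4 :: Q) I o) =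
  Some (cfg r P (2 * k + 2 :: Q) (2 * k + 4 :: 2 * k + 5 :: I) o).
Proof.
move=> hP hQ hI; rewrite /bA !runE.
case: P hP => [|p P] /= hP; case: Q hQ => [|q Q] /= hQ; case: I hI => [|t I] /= hI; crun; done.
Qed.

Lemma blockZ k r P Q I o : hdlt (2 * k + 2) P -> hdlt (2 * k + 2) Q -> hdgt (2 * k + 5) I ->
  run 2 bZ (cfg (2 * k + 2 :: 2 * k + 5 :: r) P Q I o) =
  Some (cfg r P (2 * k + 2 :: Q) (2 * k + 5 :: I) o).
Proof.
move=> hP hQ hI; rewrite /bZ !runE.
case: P hP => [|p P] /= hP; case: Q hQ => [|q Q] /= hQ; case: I hI => [|t I] /= hI; crun; done.
Qed.

Definition pairs m d := flatten [seq [:: 2 * k + 2; 2 * k + 5] | k <- rev (iota m.+1 d)].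

Lemma pairsS m d : pairs m d.+1 = 2 * (m + d) + 4 :: 2 * (m + d) + 7 :: pairs m d.
Proof.
rewrite /pairs -[d.+1]addn1 iotaD rev_cat /=.
by congr (_ :: _ :: _); lia.
Qed.

Lemma hdlt_mono a b P : a <= b -> hdlt a P -> hdlt b P.
Proof. by case: P => //= t P h1 h2; lia. Qed.

Lemma hdgt_mono a b I : b <= a -> hdgt a I -> hdgt b I.
Proof. by case: I => //= t I h1 h2; lia. Qed.

Lemma blocksA d m r P Q I o : hdlt (2 * m + 4) P -> hdlt (2 * m + 4) Q ->
  hdgt (2 * (m + d) + 5) I ->
  exists I', run 2 (flatten (nseq d bA)) (cfg (pairs m d ++ r) P (2 * (m + d) + 4 :: Q) I o)
    = Some (cfg r P (2 * m + 4 :: Q) I' o) /\ hdgt (2 * m + 5) I'.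
Proof.
move=> hP hQ; elim: d I => [|d IH] I hI.
  by exists I; rewrite addn0 in hI *.
have -> : flatten (nseq d.+1 bA) = bA ++ flatten (nseq d bA) by [].
rewrite pairsS run_cat.
have := @blockA (m + d).+1 (pairs m d ++ r) P Q I o.
have -> : 2 * (m + d).+1 + 2 = 2 * (m + d) + 4 by lia.
have -> : 2 * (m + d).+1 + 5 = 2 * (m + d) + 7 by lia.
have -> : 2 * (m + d).+1 + 4 = 2 * (m + d.+1) + 4 by lia.
move=> ->.
- apply: IH => /=; lia.
- apply: hdlt_mono hP; lia.
- apply: hdlt_mono hQ; lia.
- by apply: hdgt_mono hI; lia.
Qed.

Lemma mem_pairs m d v : v \in pairs m d ->
  exists k, [/\ m < k, k <= m + d & (v = 2 * k + 2 \/ v = 2 * k + 5)].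
Proof.
elim: d => [|d IH] //; rewrite pairsS !inE => /orP [/eqP ->|/orP [/eqP ->|/IH [k [h1 h2 h3]]]].
- by exists (m + d).+1; split => //; [lia|lia|left; lia].
- by exists (m + d).+1; split => //; [lia|lia|right; lia].
- by exists k; split => //; lia.
Qed.

Lemma omega_split i j : i <= j -> omega j = pairs i (j - i) ++ omega i.
Proof.
move=> h; rewrite /omega /pairs.
have -> : j = i + (j - i) by lia.
rewrite iotaD rev_cat map_cat flatten_cat.
by have -> : i + (j - i) - i = j - i by lia.
Qed.

Lemma rem_cat (x : nat) a b : x \notin a -> rem x (a ++ b) = a ++ rem x b.
Proof.
elim: a => //= y a IH; rewrite inE negb_or => /andP [h1 h2].
by rewrite eq_sym (negbTE h1) IH.
Qed.

Lemma sortable_of_gi s ops c o :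
  run 2 ops (cfg s [::] [::] [::] [::]) = Some (cfg [::] [::] [::] c o) ->
  (sorted ltn c -> sorted ltn (o ++ c)) -> sortable 2 s.
Proof.
move=> hr ho; apply: (sortable_of hr); apply: ho.
have hg0 : GIc s s [::] [::] [::] [::].
  by split => //; [exists 0; rewrite drop0 | rewrite !cats0].
have [i1 [a1 [b1 [c2 [o1 [E hg1]]]]]] := GIc_run hg0 hr.
by case: hg1 => _ _ _ _; case: E => _ _ _ ->.
Qed.

Lemma sortable_of0 s ops c :
  run 2 ops (cfg s [::] [::] [::] [::]) = Some (cfg [::] [::] [::] c [::]) -> sortable 2 s.
Proof. by move=> hr; apply: (sortable_of_gi hr). Qed.

Definition Fin (x : config) := exists ops c, run 2 ops x = Some (cfg [::] [::] [::] c [::]).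

Lemma Fin_run ops x y : run 2 ops x = Some y -> Fin y -> Fin x.
Proof. by move=> h [ops' [c h']]; exists (ops ++ ops'), c; rewrite run_cat h. Qed.

Lemma end43 I : hdgt 5 I -> Fin (cfg [:: 1; 5; 2] [::] [:: 4; 3] I [::]).
Proof.
move=> hI; exists [:: 0; 0; 1; 0; 2; 2; 2; 1; 2; 1; 2]; rewrite !runE.
case: I hI => [|t I] /= hI; crun; by eexists.
Qed.

Lemma end4 I : hdgt 5 I -> Fin (cfg [:: 1; 5; 2] [::] [:: 4] I [::]).
Proof.
move=> hI; exists [:: 0; 0; 1; 0; 2; 2; 1; 2; 1; 2]; rewrite !runE.
case: I hI => [|t I] /= hI; crun; by eexists.
Qed.

Lemma end3 I : hdgt 5 I -> Fin (cfg [:: 1; 5; 2] [::] [:: 3] I [::]).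
Proof.
move=> hI; exists [:: 0; 0; 1; 0; 2; 2; 1; 2; 1; 2]; rewrite !runE.
case: I hI => [|t I] /= hI; crun; by eexists.
Qed.

Lemma tailBQ n Q I : (Q = [::] \/ Q = [:: 3]) -> hdgt (2 * n + 5) I ->
  Fin (cfg (omega n ++ [:: 1; 5; 2]) [::] (2 * n + 4 :: Q) I [::]).
Proof.
move=> hQ hI.
have [I' [hr hI']] := @blocksA n 0 [:: 1; 5; 2] [::] Q I [::] isT
   (ltac:(by case: hQ => ->)) (ltac:(by rewrite add0n)).
rewrite add0n in hr.
apply: (Fin_run hr).
case: hQ => ->; [exact: end4 | exact: end43].
Qed.

Lemma tailB3 n I : hdgt (2 * n + 5) I ->
  Fin (cfg (omega n ++ [:: 1; 5; 2]) [::] [:: 3] I [::]).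
Proof.
case: n => [|m] hI; first exact: end3.
rewrite omegaS /=.
have := @blockZ m.+1 (omega m ++ [:: 1; 5; 2]) [::] [:: 3] I [::] isT.
have -> : 2 * m.+1 + 2 = 2 * m + 4 by lia.
have -> : 2 * m.+1 + 5 = 2 * m + 7 by lia.
have e : 2 * m.+1 + 5 = 2 * m + 7 by lia.
rewrite e in hI.
move=> h; have {}h := h (ltac:(rewrite /=; lia)) hI.
apply: (Fin_run h); apply: tailBQ; first by right.
by rewrite /=; lia.
Qed.

Lemma modeA j i r : i <= j -> exists I,
  run 2 ([:: 0; 1; 0] ++ flatten (nseq (j - i) bA))
    (cfg ([:: 2 * j + 4; 3] ++ pairs i (j - i) ++ r) [::] [::] [::] [::])
  = Some (cfg r [:: 3] [:: 2 * i + 4] I [::]) /\ hdgt (2 * i + 5) I.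
Proof.
move=> hij; rewrite run_cat /=.
have [I [hr hI]] := @blocksA (j - i) i r [:: 3] [::] [::] [::] (ltac:(rewrite /=; lia)) isT isT.
have e : i + (j - i) = j by lia.
by rewrite e in hr; exists I; split => //.
Qed.

Lemma Fin_sortable s : Fin (cfg s [::] [::] [::] [::]) -> sortable 2 s.
Proof. by move=> [ops [c h]]; apply: sortable_of0 h. Qed.

Lemma del_first j : sortable 2 (rem (2 * j + 4) (alpha j)).
Proof.
rewrite alphaE /= eqxx; apply: Fin_sortable.
apply: (@Fin_run [:: 0; 1] _ (cfg (W j) [::] [:: 3] [::] [::])) => //.
exact: tailB3.
Qed.

Lemma del_3 j : sortable 2 (rem 3 (alpha j)).
Proof.
rewrite alphaE /= ifF; last by apply/eqP; lia.
apply: Fin_sortable.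
apply: (@Fin_run [:: 0; 1] _ (cfg (W j) [::] [:: 2 * j + 4] [::] [::])) => //.
by apply: tailBQ; [left|].
Qed.

Lemma alpha_splitk j k : k <= j ->
  alpha j = [:: 2 * j + 4; 3] ++ pairs k (j - k) ++ (omega k ++ [:: 1; 5; 2]).
Proof. by move=> h; rewrite alphaE /W (omega_split h) -catA. Qed.

Lemma notin_pre j k x : k <= j ->
  (forall k', k < k' <= j -> x != 2 * k' + 2 /\ x != 2 * k' + 5) -> x != 2 * j + 4 -> x != 3 ->
  x \notin [:: 2 * j + 4; 3] ++ pairs k (j - k).
Proof.
move=> hk h h1 h2; rewrite mem_cat negb_or; apply/andP; split.
  by rewrite !inE negb_or h1 h2.
apply/negP => /mem_pairs [k' [k1 k2 k3]].
have [] := h k' (ltac:(apply/andP; split; lia)).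
by case: k3 => ->; rewrite eqxx.
Qed.

Lemma modeA_Fin j i r : i <= j -> (forall I, hdgt (2 * i + 5) I -> Fin (cfg r [:: 3] [:: 2 * i + 4] I [::])) ->
  Fin (cfg (2 * j + 4 :: 3 :: pairs i (j - i) ++ r) [::] [::] [::] [::]).
Proof.
move=> hij h; have [I [hr hI]] := @modeA j i r hij.
exact: Fin_run hr (h I hI).
Qed.

Lemma d3_tail n I : hdgt (2 * n + 7) I ->
  Fin (cfg (2 * n + 7 :: omega n ++ [:: 1; 5; 2]) [:: 3] [:: 2 * n + 6] I [::]).
Proof.
move=> hI; apply: (@Fin_run [:: 0; 1; 2; 2; 1] _
   (cfg (omega n ++ [:: 1; 5; 2]) [::] [:: 3] (2 * n + 6 :: 2 * n + 7 :: I) [::])).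
  rewrite !runE; case: I hI => [|t I] /= hI; crun; done.
by apply: tailB3 => /=; lia.
Qed.

Lemma d4_tail n I : hdgt (2 * n + 7) I ->
  Fin (cfg (2 * n + 4 :: omega n ++ [:: 1; 5; 2]) [:: 3] [:: 2 * n + 6] I [::]).
Proof.
move=> hI; apply: (@Fin_run [:: 2; 1; 0; 1] _
   (cfg (omega n ++ [:: 1; 5; 2]) [::] [:: 2 * n + 4; 3] (2 * n + 6 :: I) [::])).
  rewrite !runE; case: I hI => [|t I] /= hI; crun; done.
by apply: tailBQ; [right | rewrite /=; lia].
Qed.

Lemma del_pair j n : n < j ->
  sortable 2 (rem (2 * n + 4) (alpha j)) /\ sortable 2 (rem (2 * n + 7) (alpha j)).
Proof.
move=> hn.
have hk : n.+1 <= j by [].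
have pre x : x = 2 * n + 4 \/ x = 2 * n + 7 ->
    x \notin [:: 2 * j + 4; 3] ++ pairs n.+1 (j - n.+1).
  move=> hx; apply: notin_pre => //; try (apply/eqP; lia).
  by move=> k' /andP [h1 h2]; split; apply/eqP; lia.
split.
- rewrite (alpha_splitk hk) catA rem_cat; last by apply: pre; left.
  rewrite omegaS /= eqxx; apply: Fin_sortable.
  apply: modeA_Fin => // I hI.
  have e1 : 2 * n.+1 + 4 = 2 * n + 6 by lia.
  have e2 : 2 * n.+1 + 5 = 2 * n + 7 by lia.
  rewrite e1; rewrite e2 in hI; exact: d3_tail.
- rewrite (alpha_splitk hk) catA rem_cat; last by apply: pre; right.
  rewrite omegaS /= ifF; last by apply/eqP; lia.
  rewrite eqxx; apply: Fin_sortable.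
  apply: modeA_Fin => // I hI.
  have e1 : 2 * n.+1 + 4 = 2 * n + 6 by lia.
  have e2 : 2 * n.+1 + 5 = 2 * n + 7 by lia.
  rewrite e1; rewrite e2 in hI; exact: d4_tail.
Qed.

Lemma rem_tail j x : x \in [:: 1; 5; 2] ->
  rem x (alpha j) = [:: 2 * j + 4; 3] ++ pairs 0 (j - 0) ++ rem x [:: 1; 5; 2].
Proof.
move=> hx; rewrite (alpha_splitk (leq0n j)) catA rem_cat ?catA //.
have hx' : x \in [:: 1; 2; 5] by move: hx; rewrite !inE => /or3P [] ->; rewrite ?orbT.
apply: notin_pre => //.
- by move=> k' /andP [h1 h2]; move: hx'; rewrite !inE => /or3P [] /eqP ->; split; apply/eqP; lia.
- by move: hx'; rewrite !inE => /or3P [] /eqP ->; apply/eqP; lia.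
- by move: hx'; rewrite !inE => /or3P [] /eqP ->.
Qed.

Lemma del_1 j : sortable 2 (rem 1 (alpha j)).
Proof.
rewrite rem_tail // /=; apply: Fin_sortable; apply: modeA_Fin => // I hI.
exists [:: 0; 1; 2; 2; 1; 2; 0; 1; 2]; rewrite !runE.
case: I hI => [|t I] /= hI; crun; by eexists.
Qed.

Lemma del_5 j : sortable 2 (rem 5 (alpha j)).
Proof.
rewrite rem_tail // /=; apply: Fin_sortable; apply: modeA_Fin => // I hI.
exists [:: 2; 1; 0; 0; 2; 1; 2; 1; 2]; rewrite !runE.
case: I hI => [|t I] /= hI; crun; by eexists.
Qed.

Lemma del_2 j : sortable 2 (rem 2 (alpha j)).
Proof.
rewrite rem_tail // /=.
have [I [hr hI]] := @modeA j 0 [:: 1; 5] (leq0n j).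
have hr' : run 2 ([:: 0; 1; 0] ++ flatten (nseq (j - 0) bA))
   (cfg (2 * j + 4 :: 3 :: pairs 0 (j - 0) ++ [:: 1; 5]) [::] [::] [::] [::]) =
   Some (cfg [:: 1; 5] [:: 3] [:: 2 * 0 + 4] I [::]) := hr.
apply: (@sortable_of_gi _ (([:: 0; 1; 0] ++ flatten (nseq (j - 0) bA)) ++
   [:: 2; 1; 2; 0; 1; 2; 3; 3; 3; 0; 1; 2]) (5 :: I) [:: 1; 3; 4]).
  rewrite run_cat hr' !runE; clear hr hr'.
  case: I hI => [|t I] /= hI; crun; done.
by move=> h; apply: h.
Qed.

Lemma sort_del j x : x \in alpha j -> sortable 2 (rem x (alpha j)).
Proof.
rewrite alphaE inE => /orP [/eqP ->|]; first exact: del_first.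
rewrite inE => /orP [/eqP ->|]; first exact: del_3.
rewrite /W mem_cat => /orP [/mem_omega [k [h1 h2 [->|->]]]|hx].
- case: k h1 h2 => [|n] // _ h2.
  have e : 2 * n.+1 + 2 = 2 * n + 4 by lia.
  by rewrite e; case: (del_pair h2).
- case: k h1 h2 => [|n] // _ h2.
  have e : 2 * n.+1 + 5 = 2 * n + 7 by lia.
  by rewrite e; case: (del_pair h2).
- move: hx; rewrite !inE => /or3P [] /eqP ->; [exact: del_1 | exact: del_5 | exact: del_2].
Qed.

Lemma sub_rem (s t : seq nat) : uniq s -> subseq t s -> size t < size s ->
  exists x, x \in s /\ subseq t (rem x s).
Proof.
move=> us sts hsz.
case hh: (has (fun x => x \notin t) s); last first.
  move/negbT: hh; rewrite -all_predC => /allP hall.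
  have : size s <= size t.
    apply: uniq_leq_size => // x xs; have := hall x xs; rewrite /= negbK; by [].
  lia.
move/hasP: hh => [x xs xt]; exists x; split => //.
have ht := elimT (subseq_uniqP us) sts.
rewrite (rem_filter _ us).
have -> : [seq y <- s | predC1 x y] = [seq y <- s | predC1 x y] by [].
rewrite [X in subseq X _]ht.
have -> : [seq x0 <- s | x0 \in t] = [seq x0 <- [seq y <- s | predC1 x y] | x0 \in t].
  rewrite -filter_predI; apply: eq_filter => y /=.
  by case: (eqVneq y x) => [->|]; rewrite ?(negbTE xt) ?andbT.
exact: filter_subseq.
Qed.

Lemma sumn_size (l : seq (seq nat)) b : b \in l -> size b <= sumn (map size l).
Proof.
elim: l => //= c l IH; rewrite inE => /orP [/eqP ->|/IH h]; lia.
Qed.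

Theorem mainTheorem4 :
  is_class (Sort 2) /\
  ~ (exists l : seq (seq nat), forall b, in_basis (Sort 2) b -> b \in l) /\
  (forall j : nat, in_basis (Sort 2) (alpha j)).
Proof.
have closed : forall s p, Sort 2 s -> is_perm p -> contains s p -> Sort 2 p.
  move=> s p [ps ss] pp [t [sts oi]]; split => //.
  apply: (sortable_closed _ ss sts oi).
  by rewrite (perm_uniq ps) iota_uniq.
have basis : forall j, in_basis (Sort 2) (alpha j).
  move=> j; split; first exact: is_perm_alpha.
  split; first by move=> [_ h]; exact: alpha_not_sortable h.
  move=> p pp [t [sts oi]] hsz; split => //.
  have [x [xa st]] : exists x, x \in alpha j /\ subseq t (rem x (alpha j)).
    apply: sub_rem => //; first exact: uniq_alpha.
    by case: oi => ->.
  apply: (sortable_closed _ (sort_del xa) st oi).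
  by apply: rem_uniq; exact: uniq_alpha.
split; first by split => // s [].
split => //.
move=> [l hl].
have := hl _ (basis (sumn (map size l))) => /sumn_size.
rewrite size_alpha; lia.
Qed.
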